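(* For any two words $w$ and $v$ such that $v$ is a rearrangement (permutation of the letters) of $w$, the words $w$ and $v$ are cyclic Knuth equivalent.
   Context: A word is a finite sequence of letters from a totally ordered alphabet. A transformation of type $K'$ replaces three consecutive letters $yzx$ of a word with $x<y\le z$ by $yxz$. A transformation of type $K''$ replaces three consecutive letters $xzy$ with $x\le y<z$ by $zxy$. An elementary Knuth transformation is a transformation of type $K'$ or $K''$ or the inverse of one of these. The rotation $R$ moves the last letter of a word to the front. An elementary cyclic Knuth transformation is an elementary Knuth transformation or $R$; two words are cyclic Knuth equivalent if one can be obtained from the other by a finite sequence of elementary cyclic Knuth transformations. *)

(* Defs.v *)
From HB Require Import structures.
From mathcomp Require Import all_boot all_order.
From Stdlib Require Import Relations.
Set Implicit Arguments. Unset Strict Implicit. Unset Printing Implicit Defensive.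
Import Order.TTheory.
Local Open Scope order_scope.

Section Knuth.
Context {d : Order.disp_t} {T : orderType d}.

Definition knuthK1 (w w' : seq T) : Prop :=
  exists (u v : seq T) (x y z : T),
    x < y /\ y <= z /\ w = u ++ [:: y; z; x] ++ v /\ w' = u ++ [:: y; x; z] ++ v.

Definition knuthK2 (w w' : seq T) : Prop :=
  exists (u v : seq T) (x y z : T),
    x <= y /\ y < z /\ w = u ++ [:: x; z; y] ++ v /\ w' = u ++ [:: z; x; y] ++ v.

Definition elem_knuth (w w' : seq T) : Prop :=
  knuthK1 w w' \/ knuthK2 w w' \/ knuthK1 w' w \/ knuthK2 w' w.

Definition rotR (w : seq T) : seq T :=
  match w with
  | [::] => [::]
  | a :: s => last a s :: belast a s
  end.

Definition elem_cyc_knuth (w w' : seq T) : Prop :=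
  elem_knuth w w' \/ w' = rotR w.

Definition cyc_knuth_equiv (w v : seq T) : Prop :=
  clos_refl_trans (seq T) elem_cyc_knuth w v.
End Knuth.

(* Main.v *)
Require Import Defs.
From HB Require Import structures.
From mathcomp Require Import all_boot all_order.
From mathcomp Require Import zify.
From Stdlib Require Import Relations.
Import Order.TTheory.

Section Proof.
Context {d : Order.disp_t} {T : orderType d}.
Local Open Scope order_scope.

Definition cyc := @cyc_knuth_equiv d T.
Definition Kn := clos_refl_trans (seq T) (@elem_knuth d T).

Lemma cyc_trans {a b c : seq T} : cyc a b -> cyc b c -> cyc a c.
Proof. exact: rt_trans. Qed.

Lemma rot1 (s : seq T) (y : T) : cyc (rcons s y) (y :: s).
Proof.
apply: rt_step; right.
case: s => [|a s] //=.
by rewrite last_rcons belast_rcons.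
Qed.

Lemma rotc (q p : seq T) : cyc (p ++ q) (q ++ p).
Proof.
elim/last_ind: q p => [|q y IH] p.
  by rewrite cats0; apply: rt_refl.
rewrite -rcons_cat cat_rcons.
apply: cyc_trans (rot1 _ _) _.
exact: (IH (y :: p)).
Qed.

Lemma step_sym (w w' : seq T) : elem_cyc_knuth w w' -> cyc w' w.
Proof.
case=> [H|->].
  apply: rt_step; left.
  by move: H; rewrite /elem_knuth; tauto.
case: w => [|a s]; first by apply: rt_refl.
rewrite /= [in X in cyc _ X]lastI.
have := rotc (belast a s) [:: last a s].
by rewrite /= cats1.
Qed.

Lemma cyc_sym {w w' : seq T} : cyc w w' -> cyc w' w.
Proof.
elim=> [x y H|x|x y z _ H1 _ H2].
- exact: step_sym.
- exact: rt_refl.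
- exact: cyc_trans H2 H1.
Qed.

Lemma Kn_cyc {w w' : seq T} : Kn w w' -> cyc w w'.
Proof.
elim=> [x y H|x|x y z _ H1 _ H2].
- by apply: rt_step; left.
- exact: rt_refl.
- exact: cyc_trans H1 H2.
Qed.

Lemma elem_ctx (u v w w' : seq T) :
  elem_knuth w w' -> elem_knuth (u ++ w ++ v) (u ++ w' ++ v).
Proof.
have K1 : forall a b, knuthK1 a b -> knuthK1 (u ++ a ++ v) (u ++ b ++ v).
  move=> a b [u0 [v0 [x [y [z [h1 [h2 [-> ->]]]]]]]].
  exists (u ++ u0), (v0 ++ v), x, y, z; split; first by [].
  by split; first by []; rewrite -!catA.
have K2 : forall a b, knuthK2 a b -> knuthK2 (u ++ a ++ v) (u ++ b ++ v).
  move=> a b [u0 [v0 [x [y [z [h1 [h2 [-> ->]]]]]]]].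
  exists (u ++ u0), (v0 ++ v), x, y, z; split; first by [].
  by split; first by []; rewrite -!catA.
case=> [H|[H|[H|H]]]; rewrite /elem_knuth.
- by left; apply: K1.
- by right; left; apply: K2.
- by right; right; left; apply: K1.
- by right; right; right; apply: K2.
Qed.

Lemma Kn_ctx (u v : seq T) {w w' : seq T} : Kn w w' -> Kn (u ++ w ++ v) (u ++ w' ++ v).
Proof.
elim=> [x y H|x|x y z _ H1 _ H2].
- by apply: rt_step; apply: elem_ctx.
- exact: rt_refl.
- exact: rt_trans H1 H2.
Qed.

Lemma K1s {x y z : T} : x < y -> y <= z -> Kn [:: y; z; x] [:: y; x; z].
Proof.
move=> h1 h2; apply: rt_step; left.
by exists [::], [::], x, y, z; rewrite !cats0.
Qed.

Lemma K2s {x y z : T} : x <= y -> y < z -> Kn [:: x; z; y] [:: z; x; y].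
Proof.
move=> h1 h2; apply: rt_step; right; left.
by exists [::], [::], x, y, z; rewrite !cats0.
Qed.


Lemma R1 (x y : T) (s : seq T) :
  pairwise <=%O (y :: s) -> all (fun z => x < z) (y :: s) ->
  Kn (y :: s ++ [:: x]) (y :: x :: s).
Proof.
elim/last_ind: s => [|s1 z IH] Hp Ha; first exact: rt_refl.
move: Hp Ha; rewrite -cats1 -cat_cons pairwise_cat allrel1r all_cat.
case/and3P=> Hz Hp _ /andP[Ha /andP[Hxz _]].
have haz : last y s1 <= z by move/allP: Hz; apply; exact: mem_last.
have hxa : x < last y s1 by move/allP: Ha; apply; exact: mem_last.
have H := Kn_ctx (belast y s1) [::] (K1s hxa haz).
rewrite !cats0 in H.
have -> : y :: (s1 ++ [:: z]) ++ [:: x] = belast y s1 ++ [:: last y s1; z; x].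
  by rewrite -catA -cat_cons [y :: s1]lastI cat_rcons.
apply: rt_trans H _.
have -> : belast y s1 ++ [:: last y s1; x; z] = [::] ++ (y :: s1 ++ [:: x]) ++ [:: z].
  by rewrite /= -catA -cat_cons [y :: s1]lastI cat_rcons.
have -> : y :: x :: (s1 ++ [:: z]) = [::] ++ (y :: x :: s1) ++ [:: z] by [].
by apply: Kn_ctx; apply: IH.
Qed.

Lemma R2 (y : T) (r1 : seq T) : forall x,
  pairwise <=%O r1 -> all (fun z => z <= x) r1 -> x < y ->
  Kn (r1 ++ [:: y; x]) (y :: r1 ++ [:: x]).
Proof.
elim/last_ind: r1 => [|r0 a IH] x Hp Ha Hxy; first exact: rt_refl.
move: Hp Ha; rewrite -cats1 pairwise_cat allrel1r all_cat /=.
case/and3P=> Hr0 Hp _ /andP[_ /andP[hax _]].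
have H := Kn_ctx r0 [::] (K2s hax Hxy).
rewrite !cats0 in H.
rewrite -catA /=; apply: rt_trans H _.
have -> : r0 ++ [:: y; a; x] = [::] ++ (r0 ++ [:: y; a]) ++ [:: x] by rewrite -catA.
have -> : y :: (r0 ++ [:: a]) ++ [:: x] = [::] ++ (y :: r0 ++ [:: a]) ++ [:: x] by [].
apply: Kn_ctx; apply: IH => //.
exact: le_lt_trans hax Hxy.
Qed.

Lemma decomp (P : pred T) (p : seq T) : has P p ->
  exists r1 y r2, p = r1 ++ y :: r2 /\ all (predC P) r1 /\ P y.
Proof.
elim: p => [|a p IH] //= /orP[Pa|Hp].
  by exists [::], a, p.
case: (boolP (P a)) => Pa; first by exists [::], a, p.
have [r1 [y [r2 [-> [H1 H2]]]]] := IH Hp.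
by exists (a :: r1), y, r2; rewrite /= Pa H1.
Qed.

Definition rank (v : seq T) (z : T) := count (fun t => t < z) v.
Definition weight (v p : seq T) := sumn (map (rank v) p).

Lemma rank_lt (v : seq T) (x y : T) : x \in v -> x < y -> (rank v x < rank v y)%N.
Proof.
rewrite /rank.
elim: v => [|t v IH] //=; rewrite inE => /orP[/eqP <-|xin] hxy.
  rewrite ltxx hxy /= add0n add1n ltnS.
  by apply: sub_count => t' /= h; exact: lt_trans h hxy.
have h1 := IH xin hxy.
have h2 : (nat_of_bool (t < x)%O <= nat_of_bool (t < y)%O)%N.
  by case H: (t < x); rewrite ?(lt_trans H hxy).
by apply: leq_trans (leq_add h2 h1); rewrite addnS.
Qed.

Lemma alg (v : seq T) : pairwise <=%O v -> forall k q p, size q = k ->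
  pairwise <=%O p -> perm_eq (p ++ q) v -> cyc (p ++ q) v.
Proof.
move=> Hv; elim/ltn_ind => k IHk.
suff H : forall m p q, weight v p = m -> size q = k -> pairwise <=%O p ->
    perm_eq (p ++ q) v -> cyc (p ++ q) v.
  by move=> q p Hq; apply: H.
elim/ltn_ind => m IHm p [|x q'] Hm Hk Hp Hperm.
  rewrite cats0 in Hperm *.
  have -> : p = v.
    apply: (sorted_eq (@le_trans _ T) (@le_anti _ T)) => //;
      by rewrite sorted_pairwise //; exact: le_trans.
  exact: rt_refl.
case: (boolP (all (fun z => z <= x) p)) => Hall.
  have E : p ++ x :: q' = (p ++ [:: x]) ++ q' by rewrite -catA.
  rewrite E in Hperm *.
  apply: (IHk (size q')) => //; first by rewrite -Hk.
  by rewrite pairwise_cat allrel1r Hall Hp.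
have Hh : has (fun z => x < z) p.
  move: Hall; rewrite -has_predC; apply: sub_has => z /=.
  by rewrite -ltNge.
have [r1 [y [r2 [Ep [H1 Hy]]]]] := decomp _ _ Hh; subst p.
move: Hp; rewrite pairwise_cat pairwise_cons allrel_consr.
case/and3P => /andP[Hr1y Hr1r2] Hr1 /andP[Hyr2 Hr2].
have Hr1x : all (fun z => z <= x) r1.
  apply/allP => z zin; move/allP: H1 => /(_ z zin) /=.
  by rewrite leNgt.
have Hxr2 : all (fun z => x <= z) r2.
  apply/allP => z zin; apply: ltW; apply: lt_le_trans Hy _.
  by move/allP: Hyr2; apply.
set p' := r1 ++ x :: r2.
have K : Kn ((r1 ++ y :: r2) ++ x :: q') (y :: p' ++ q').
  have E1 : (r1 ++ y :: r2) ++ x :: q' = r1 ++ (y :: r2 ++ [:: x]) ++ q'.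
    by rewrite -!catA /= -!catA.
  have HR1 : Kn (y :: r2 ++ [:: x]) (y :: x :: r2).
    apply: R1; first by rewrite pairwise_cons Hyr2 Hr2.
    by rewrite /= Hy; apply/allP => z zin; apply: lt_le_trans Hy _; move/allP: Hyr2; apply.
  rewrite E1; apply: rt_trans (Kn_ctx r1 q' HR1) _.
  have E2 : r1 ++ (y :: x :: r2) ++ q' = [::] ++ (r1 ++ [:: y; x]) ++ (r2 ++ q').
    by rewrite /= -catA.
  rewrite E2; apply: rt_trans (Kn_ctx [::] (r2 ++ q') (R2 y r1 x Hr1 Hr1x Hy)) _.
  rewrite /= /p' -!catA /=; exact: rt_refl.
apply: cyc_trans (Kn_cyc K) _.
have Hrot : cyc (y :: p' ++ q') (p' ++ (q' ++ [:: y])).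
  have := rotc (p' ++ q') [:: y].
  by rewrite -catA.
apply: cyc_trans Hrot _.
have Hlt : (weight v p' < m)%N.
  rewrite -Hm /weight /p' !map_cat !sumn_cat /=.
  have : (rank v x < rank v y)%N.
    apply: rank_lt Hy.
    by rewrite -(perm_mem Hperm) mem_cat inE eqxx orbT.
  move=> h; rewrite ltn_add2l ltn_add2r; exact: h.
have Hsz : size (q' ++ [:: y]) = k by rewrite size_cat /= -Hk addn1.
have Hp' : pairwise <=%O p'.
  by rewrite /p' pairwise_cat allrel_consr pairwise_cons Hr1x Hr1r2 Hr1 Hxr2 Hr2.
have Hperm' : perm_eq (p' ++ q' ++ [:: y]) v.
  apply: perm_trans Hperm.
  apply/permP => P; rewrite /p' !count_cat /=.
  move: (nat_of_bool (P x)) (nat_of_bool (P y)) (count P r1) (count P r2) (count P q') => a b c e f.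
  lia.
exact: (IHm _ Hlt p' (q' ++ [:: y]) erefl Hsz Hp' Hperm').
Qed.

End Proof.

Theorem mainTheorem11 (d : Order.disp_t) (T : orderType d) (w v : seq T) :
  perm_eq w v -> cyc_knuth_equiv w v.
Proof.
move=> Hwv.
set s := sort <=%O w.
have Hs : pairwise <=%O s.
  by rewrite -sorted_pairwise; [apply: sort_sorted; exact: le_total | exact: le_trans].
have Hw : cyc w s.
  apply: (alg s Hs (size w) w [::]) => //.
  by rewrite /= /s perm_sym perm_sort.
have Hv : cyc v s.
  apply: (alg s Hs (size v) v [::]) => //.
  by rewrite /= /s perm_sym perm_sort.
exact: cyc_trans Hw (cyc_sym Hv).
Qed.
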